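(* For each positive integer $N$, let $$f^{(2)}(N)=\{\, y\in\mathbb{R} \;:\; y\equiv \sqrt{2n} \pmod 1 \text{ for some } n\in\mathbb{N},\ 2n\le N,\ \sqrt{2n}\notin\mathbb{N}\,\},$$ the set of fractional parts of $\sqrt{2n}$ (for $2n\le N$ not a perfect square), extended periodically with period $1$. For a set $A\subset\mathbb{R}$ and $x\in\mathbb{R}$ define $$\operatorname{gap}_x(A)=\inf\{y\in A: y>x\}-\sup\{y\in A: y<x\},$$ and set $G^{(2)}(x)=\lim_{N\to\infty}2\sqrt{N}\,\operatorname{gap}_x(f^{(2)}(N))$. Then for coprime integers $p,q$ with $q\ge 2$, $$G^{(2)}\!\left(\tfrac{p}{q}\right)=\begin{cases}\frac{4}{q} & q\equiv 2 \pmod 4,\\ \frac{2}{q} & q\equiv 0 \pmod 4,\\ \frac{1}{q} & q\equiv 1 \pmod 2.\end{cases}$$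
   Context: $\mathbb{N}$ denotes the positive integers. The fractional part of a real number $t$ is $t-\lfloor t\rfloor$. *)

(* Defs.v *)
From Stdlib Require Import Reals ZArith.
From Coquelicot Require Import Coquelicot.
Open Scope R_scope.

Definition f2 (N : nat) : R -> Prop :=
  fun y => exists (n : nat) (k : Z),
    (1 <= n)%nat /\ (2 * n <= N)%nat /\
    ~ (exists m : nat, sqrt (INR (2 * n)) = INR m) /\
    y = sqrt (INR (2 * n)) + IZR k.

(* gap_x(A) = inf {y in A | y > x} - sup {y in A | y < x}.
   inf / sup are taken in the extended reals (Coquelicot's Glb_Rbar /
   Lub_Rbar) and projected to R with [real]; for all N >= 2 both sets are
   nonempty and bounded on the relevant side, so both values are finite. *)
Definition gap (x : R) (A : R -> Prop) : R :=
  real (Glb_Rbar (fun y => A y /\ x < y)) - real (Lub_Rbar (fun y => A y /\ y < x)).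

Definition G2seq (x : R) (N : nat) : R := 2 * sqrt (INR N) * gap x (f2 N).

(* Main.v *)
Require Import Defs.
From Stdlib Require Import Reals ZArith.
From Coquelicot Require Import Coquelicot.
From Stdlib Require Import Lia Lra Psatz.
Open Scope Z_scope.

Lemma odd_F2 (p q h j u v : Z) : q = 2*h+1 -> u*p + v*q = 1 ->
  exists t w, (p+q*t)*(p+q*t) - p*p + q*j = 2*q*q*w.
Proof.
  intros Hq Hb.
  set (t1 := -(j*u*(h+1))).
  set (A := -j + (q+1)*j*v).
  assert (E : j + 2*p*t1 = q*A).
  { replace (j + 2*p*t1) with (j - (2*h+2)*j*(u*p)) by (unfold t1; ring).
    replace (u*p) with (1 - v*q) by lia. unfold A. rewrite Hq. ring. }
  assert (HA : A = -j + (q+1)*j*v) by reflexivity.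
  clearbody t1 A.
  set (z := j + t1). set (R := t1 + h*z).
  destruct (Z.Even_or_Odd j) as [[i Hi]|[i Hi]].
  - exists (t1 + q*z), ((2*i*i - i) + (h+1)*j*v + p*z + 2*j*R + 2*R*R).
    replace ((p + q * (t1 + q * z)) * (p + q * (t1 + q * z)) - p * p + q * j)
      with (q*((j + 2*p*t1) + 2*p*q*z + q*(t1+q*z)*(t1+q*z))) by ring.
    rewrite E. unfold R, z in *. subst A q j. ring.
  - exists (t1 + q*z), ((2*i*i + i) + (h+1)*j*v + p*z + 2*j*R + 2*R*R).
    replace ((p + q * (t1 + q * z)) * (p + q * (t1 + q * z)) - p * p + q * j)
      with (q*((j + 2*p*t1) + 2*p*q*z + q*(t1+q*z)*(t1+q*z))) by ring.
    rewrite E. unfold R, z in *. subst A q j. ring.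
Qed.

Lemma four_F2 (p q s p' j u v : Z) : q = 4*s -> p = 2*p'+1 -> u*p + v*q = 1 ->
  exists t w, (p+q*t)*(p+q*t) - p*p + 2*q*j = 2*q*q*w.
Proof.
  intros Hq Hp Hb.
  set (t1 := -(j*u)).
  assert (E : j + p*t1 = q*(j*v)).
  { replace (j + p*t1) with (j - j*(u*p)) by (unfold t1; ring).
    replace (u*p) with (1 - v*q) by lia. ring. }
  clearbody t1.
  destruct (Z.Even_or_Odd t1) as [[i Hi]|[i Hi]].
  - exists (t1*(1+2*s)), (j*v + i*(p+2*i) + 2*s*t1*t1 + 2*s*s*t1*t1).
    replace ((p + q * (t1*(1+2*s))) * (p + q * (t1*(1+2*s))) - p * p + 2*q * j)
      with (2*q*((j + p*t1) + 2*s*p*t1 + 2*s*(t1*(1+2*s))*(t1*(1+2*s)))) by (subst q; ring).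
    rewrite E. subst q t1. ring.
  - exists (t1*(1+2*s)), (j*v + (2*i+1)*(p'+i+1) + 2*s*t1*t1 + 2*s*s*t1*t1).
    replace ((p + q * (t1*(1+2*s))) * (p + q * (t1*(1+2*s))) - p * p + 2*q * j)
      with (2*q*((j + p*t1) + 2*s*p*t1 + 2*s*(t1*(1+2*s))*(t1*(1+2*s)))) by (subst q; ring).
    rewrite E. subst q t1 p. ring.
Qed.

Lemma two_F2 (p q r j u v : Z) : q = 2*r -> u*p + v*q = 1 ->
  exists t w, (p+q*t)*(p+q*t) - p*p + 4*q*j = 2*q*q*w.
Proof.
  intros Hq Hb.
  set (t1 := -(2*j*u)).
  assert (E : 2*j + p*t1 = q*(2*j*v)).
  { replace (2*j + p*t1) with (2*j - 2*j*(u*p)) by (unfold t1; ring).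
    replace (u*p) with (1 - v*q) by lia. ring. }
  exists t1, (2*j*v + 2*j*j*u*u).
  replace ((p + q * t1) * (p + q * t1) - p * p + 4*q * j)
      with (2*q*((2*j + p*t1) + r*t1*t1)) by (subst q; ring).
  rewrite E. unfold t1. subst q. ring.
Qed.

Lemma odd_F1 (p q t : Z) : exists z, (p+q*t)*(p+q*t) - p*p = q*z.
Proof. exists (2*p*t + q*t*t). ring. Qed.

Lemma four_F1 (p q s t : Z) : q = 4*s -> exists z, (p+q*t)*(p+q*t) - p*p = 2*q*z.
Proof. intros ->. exists (p*t + 2*s*t*t). ring. Qed.

Lemma two_F1 (p q r p' r' t : Z) : q = 2*r -> r = 2*r'+1 -> p = 2*p'+1 ->
  exists z, (p+q*t)*(p+q*t) - p*p = 4*q*z.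
Proof.
  intros Hq Hr Hp. destruct (Z.Even_or_Odd t) as [[i Hi]|[i Hi]].
  - exists (i*(p+2*r*i)). subst. ring.
  - exists ((2*i+1)*(p' + r'*(2*i+1) + i + 1)). subst. ring.
Qed.

Lemma hyps (p q M : Z) : 2 <= q -> Z.gcd p q = 1 -> 0 < M ->
  (exists k, M = q*k) ->
  (forall t, exists z, (p+q*t)*(p+q*t) - p*p = M*z) ->
  (forall j, exists t w, (p+q*t)*(p+q*t) - p*p + M*j = 2*q*q*w) ->
  exists c, 0 < c < M /\
  (forall t, exists z, (p+q*t)*(p+q*t) + c = M*z) /\
  (exists t w, (p+q*t)*(p+q*t) + c = 2*q*q*w) /\
  (exists t w, (p+q*t)*(p+q*t) + c - M = 2*q*q*w).
Proof.
  intros Hq Hg HM [k Hk] F1 F2.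
  set (c := (-(p*p)) mod M).
  assert (Hdm := Z.div_mod (-(p*p)) M ltac:(lia)).
  assert (Hb := Z.mod_pos_bound (-(p*p)) M HM).
  fold c in Hdm, Hb. set (D := -(p*p) / M) in *. clearbody c D.
  exists c. split; [split|]; [| lia |].
  - destruct (Z.eq_dec c 0) as [E|E]; [|lia]. exfalso.
    assert (Hd : (q | p*p)). { exists (-(k*D)). rewrite E, Hk in Hdm. rewrite Z.add_0_r in Hdm. replace (p*p) with (-(q*k*D)) by lia. ring. }
    apply Z.gauss in Hd; [|rewrite Z.gcd_comm; exact Hg].
    assert (Hd2 : (q | Z.gcd p q)) by (apply Z.gcd_greatest; [exact Hd| apply Z.divide_refl]).
    rewrite Hg in Hd2. apply Z.divide_pos_le in Hd2; lia.
  - split; [|split].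
    + intro t. destruct (F1 t) as [z Hz]. exists (z - D). rewrite Z.mul_sub_distr_l. lia.
    + destruct (F2 (-D)) as [t [w Hw]]. exists t, w. rewrite <- Hw. rewrite Z.mul_opp_r. lia.
    + destruct (F2 (-D-1)) as [t [w Hw]]. exists t, w. rewrite <- Hw. rewrite Z.mul_sub_distr_l, Z.mul_opp_r. lia.
Qed.

Open Scope R_scope.

Lemma L_glb (E : R -> Prop) (lb y0 : R) : E y0 -> (forall y, E y -> lb <= y) ->
  lb <= real (Glb_Rbar E) <= y0.
Proof.
  intros H0 Hlb. destruct (Glb_Rbar_correct E) as [H1 H2].
  assert (A := H1 y0 H0).
  assert (B : Rbar_le lb (Glb_Rbar E)) by (apply H2; intros y Hy; apply Hlb, Hy).
  destruct (Glb_Rbar E); simpl in *; try contradiction; lra.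
Qed.

Lemma L_lub (E : R -> Prop) (ub y0 : R) : E y0 -> (forall y, E y -> y <= ub) ->
  y0 <= real (Lub_Rbar E) <= ub.
Proof.
  intros H0 Hub. destruct (Lub_Rbar_correct E) as [H1 H2].
  assert (A := H1 y0 H0).
  assert (B : Rbar_le (Lub_Rbar E) ub) by (apply H2; intros y Hy; apply Hub, Hy).
  destruct (Lub_Rbar E); simpl in *; try contradiction; lra.
Qed.

Lemma sqrt_ev (C : R) : eventually (fun N => C <= sqrt (INR N)).
Proof.
  assert (H := is_lim_seq_INR). apply is_lim_seq_spec in H. simpl in H.
  destruct (H (C*C)) as [N0 HN]. exists N0. intros n Hn. specialize (HN n Hn).
  apply Rle_trans with (Rabs C). apply Rle_abs.
  rewrite <- sqrt_Rsqr_abs. apply sqrt_le_1_alt. unfold Rsqr. lra.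
Qed.

Lemma ratio_lim (u : nat -> R) (b : R) : (forall C, eventually (fun N => C <= u N)) ->
  is_lim_seq (fun N => u N / (u N - b)) 1.
Proof.
  intros Hu. apply is_lim_seq_spec. intros eps.
  destruct (Hu (b + Rabs b / eps + 1)) as [N0 HN]. exists N0. intros n Hn.
  specialize (HN n Hn). assert (Heps := cond_pos eps).
  assert (H0 : 0 <= Rabs b / eps) by (apply Rdiv_le_0_compat; [apply Rabs_pos|lra]).
  assert (Hd : 0 < u n - b) by lra.
  replace (u n / (u n - b) - 1) with (b / (u n - b)) by (field; lra).
  rewrite Rabs_div by lra. rewrite (Rabs_right (u n - b)) by lra.
  apply Rlt_div_l; [lra|].
  assert (Rabs b = eps * (Rabs b / eps)) by (field; lra).
  nra.
Qed.

Lemma div_le (a b c d : R) : 0 < b -> 0 < d -> a * d <= c * b -> a / b <= c / d.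
Proof.
  intros Hb Hd H. unfold Rdiv.
  apply Rmult_le_reg_r with (b*d). nra.
  replace (a * / b * (b * d)) with (a*d) by (field; lra).
  replace (c * / d * (b * d)) with (c*b) by (field; lra). exact H.
Qed.


Lemma geZ (k c M X : Z) : (0 < k)%Z -> (0 < c < M)%Z -> (k - c = M*X)%Z -> (c <= k)%Z.
Proof. intros. destruct (Z_le_gt_dec 0 X); nia. Qed.

Lemma s_facts (n N : nat) : (1 <= n)%nat -> (2*n <= N)%nat ->
  sqrt (INR (2*n)) * sqrt (INR (2*n)) = IZR (2 * Z.of_nat n) /\
  1 <= sqrt (INR (2*n)) /\ sqrt (INR (2*n)) <= sqrt (INR N).
Proof.
  intros H1 H2. split; [|split].
  - rewrite sqrt_sqrt by apply pos_INR. rewrite INR_IZR_INZ, Nat2Z.inj_mul. reflexivity.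
  - rewrite <- sqrt_1. apply sqrt_le_1_alt. replace 1 with (INR 1) by reflexivity.
    apply le_INR. lia.
  - apply sqrt_le_1_alt, le_INR, H2.
Qed.

Lemma lower_U (p q M c w : Z) (N n : nat) (K : Z) :
  (2 <= q)%Z -> (0 < c < M)%Z -> (M <= 4*q)%Z -> (2*q*q = M*w)%Z ->
  (forall t, exists z, ((p+q*t)*(p+q*t) + c = M*z)%Z) ->
  (1 <= n)%nat -> (2*n <= N)%nat ->
  IZR p / IZR q < sqrt (INR (2*n)) + IZR K ->
  IZR p / IZR q + IZR c / (2 * IZR q * IZR q * sqrt (INR N)) <= sqrt (INR (2*n)) + IZR K.
Proof.
  intros Hq Hc HM Hw H1 Hn1 Hn2 Hlt.
  destruct (s_facts n N Hn1 Hn2) as [Hs2 [Hs1 Hsu]].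
  set (s := sqrt (INR (2*n))) in *. set (u := sqrt (INR N)) in *.
  set (nz := Z.of_nat n) in *.
  assert (Hqr : 2 <= IZR q) by (apply IZR_le; lia).
  assert (HcM : IZR c <= IZR M) by (apply IZR_le; lia).
  assert (Hc0 : 0 < IZR c) by (apply IZR_lt; lia).
  assert (HM4 : IZR M <= 4 * IZR q) by (rewrite <- mult_IZR; apply IZR_le; lia).
  set (a := (p - q*K)%Z).
  assert (Ha : IZR a = IZR p - IZR q * IZR K) by (unfold a; rewrite minus_IZR, mult_IZR; ring).
  assert (Hyx : s + IZR K - IZR p / IZR q = s - IZR a / IZR q)
    by (rewrite Ha; field; lra).
  assert (Hpos : 0 < 2 * IZR q * IZR q * u) by (apply Rmult_lt_0_compat; nra).
  cut (IZR c / (2 * IZR q * IZR q * u) <= s - IZR a / IZR q).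
  { intros; fold s; lra. }
  destruct (Z_le_gt_dec a 0) as [Ha0|Ha0].
  - apply IZR_le in Ha0.
    assert (IZR a / IZR q <= 0).
    { unfold Rdiv. apply Rmult_le_0_r; [lra|]. left; apply Rinv_0_lt_compat; lra. }
    apply Rle_trans with 1; [|lra].
    rewrite <- (Rdiv_1_r 1). apply div_le; try lra. nra.
  - assert (Ha0r : 0 < IZR a) by (apply IZR_lt; lia).
    assert (Hqs : IZR a < IZR q * s).
    { assert (IZR a / IZR q < s) by (fold s in Hlt; lra).
      apply Rmult_lt_compat_l with (r := IZR q) in H; [|lra].
      replace (IZR q * (IZR a / IZR q)) with (IZR a) in H by (field; lra). lra. }
    set (k := (2*nz*q*q - a*a)%Z).
    assert (Hk : IZR k = IZR q * IZR q * (s*s) - IZR a * IZR a).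
    { rewrite Hs2. unfold k. rewrite minus_IZR, !mult_IZR. ring. }
    assert (Hk0 : (0 < k)%Z) by (apply lt_IZR; rewrite Hk; nra).
    destruct (H1 (-K)%Z) as [z Hz].
    assert (Hck : (c <= k)%Z).
    { apply (geZ k c M (nz*w - z)); auto.
      replace (p + q * - K)%Z with a in Hz by (unfold a; ring).
      unfold k. replace (2*nz*q*q)%Z with (nz*(2*q*q))%Z by ring. rewrite Hw.
      rewrite Z.mul_sub_distr_l. rewrite <- Hz. ring. }
    apply IZR_le in Hck.
    replace (s - IZR a / IZR q) with (IZR k / (IZR q * (IZR q * s + IZR a)))
      by (rewrite Hk; field; split; nra).
    apply div_le; [nra|nra|].
    assert (0 < IZR q * (IZR q * s + IZR a)) by nra.
    assert (IZR q * (IZR q * s + IZR a) <= 2 * IZR q * IZR q * u) by nra.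
    nra.
Qed.

Lemma lower_L (p q M c w : Z) (N n : nat) (K : Z) :
  (2 <= q)%Z -> (0 < c < M)%Z -> (M <= 4*q)%Z -> (2*q*q = M*w)%Z ->
  (forall t, exists z, ((p+q*t)*(p+q*t) + c = M*z)%Z) ->
  (1 <= n)%nat -> (2*n <= N)%nat ->
  sqrt (INR (2*n)) + IZR K < IZR p / IZR q ->
  sqrt (INR (2*n)) + IZR K <= IZR p / IZR q - IZR (M - c) / (IZR q * IZR q * (2 * sqrt (INR N) + 1)).
Proof.
  intros Hq Hc HM Hw H1 Hn1 Hn2 Hlt.
  destruct (s_facts n N Hn1 Hn2) as [Hs2 [Hs1 Hsu]].
  set (s := sqrt (INR (2*n))) in *. set (u := sqrt (INR N)) in *.
  set (nz := Z.of_nat n) in *.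
  assert (Hqr : 2 <= IZR q) by (apply IZR_le; lia).
  assert (HcM : 0 < IZR (M - c)) by (apply IZR_lt; lia).
  assert (HM4 : IZR (M - c) <= 4 * IZR q) by (rewrite <- mult_IZR; apply IZR_le; lia).
  set (a := (p - q*K)%Z).
  assert (Ha : IZR a = IZR p - IZR q * IZR K) by (unfold a; rewrite minus_IZR, mult_IZR; ring).
  assert (Hyx : IZR p / IZR q - (s + IZR K) = IZR a / IZR q - s)
    by (rewrite Ha; field; lra).
  assert (Hpos : 0 < IZR q * IZR q * (2 * u + 1)) by (apply Rmult_lt_0_compat; nra).
  cut (IZR (M - c) / (IZR q * IZR q * (2 * u + 1)) <= IZR a / IZR q - s).
  { intros; lra. }
  assert (Hqs : IZR q * s < IZR a).
  { assert (s < IZR a / IZR q) by lra.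
    apply Rmult_lt_compat_l with (r := IZR q) in H; [|lra].
    replace (IZR q * (IZR a / IZR q)) with (IZR a) in H by (field; lra). lra. }
  destruct (Rle_lt_dec 1 (IZR a / IZR q - s)) as [Hbig|Hsmall].
  - apply Rle_trans with 1; [|lra].
    rewrite <- (Rdiv_1_r 1). apply div_le; try lra. nra.
  - assert (Has : IZR a < IZR q * (s + 1)).
    { assert (IZR a / IZR q < s + 1) by lra.
      apply Rmult_lt_compat_l with (r := IZR q) in H; [|lra].
      replace (IZR q * (IZR a / IZR q)) with (IZR a) in H by (field; lra). lra. }
    set (k := (a*a - 2*nz*q*q)%Z).
    assert (Hk : IZR k = IZR a * IZR a - IZR q * IZR q * (s*s)).
    { rewrite Hs2. unfold k. rewrite minus_IZR, !mult_IZR. ring. }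
    assert (Hqs0 : 0 <= IZR q * s) by nra.
    assert (Hsq : IZR q * s * (IZR q * s) < IZR a * IZR a) by nra.
    assert (Hk0 : (0 < k)%Z) by (apply lt_IZR; rewrite Hk; nra).
    destruct (H1 (-K)%Z) as [z Hz].
    assert (Hck : (M - c <= k)%Z).
    { apply (geZ k (M - c) M (z - 1 - nz*w)); auto. lia.
      replace (p + q * - K)%Z with a in Hz by (unfold a; ring).
      unfold k. replace (2*nz*q*q)%Z with (nz*(2*q*q))%Z by ring. rewrite Hw.
      rewrite !Z.mul_sub_distr_l. rewrite <- Hz. ring. }
    apply IZR_le in Hck.
    replace (IZR a / IZR q - s) with (IZR k / (IZR q * (IZR a + IZR q * s)))
      by (rewrite Hk; field; split; nra).
    apply div_le; [nra|nra|].
    assert (0 < IZR q * (IZR a + IZR q * s)) by nra.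
    assert (IZR q * (IZR a + IZR q * s) <= IZR q * IZR q * (2 * u + 1)) by nra.
    nra.
Qed.


Lemma choose_a (p q t0 : Z) (T : R) : (2 <= q)%Z -> exists m : Z,
  IZR (p + q*(t0 + 2*q*m)) <= T - 1 /\ T - 1 - 2*IZR q*IZR q < IZR (p + q*(t0 + 2*q*m)).
Proof.
  intros Hq. assert (Hqr : 2 <= IZR q) by (apply IZR_le; lia).
  set (m := Int_part ((T - 1 - IZR (p + q*t0)) / (2*IZR q*IZR q))).
  exists m. destruct (base_Int_part ((T - 1 - IZR (p + q*t0)) / (2*IZR q*IZR q))) as [B1 B2].
  fold m in B1, B2.
  replace (IZR (p + q*(t0 + 2*q*m))) with (IZR (p + q*t0) + 2*IZR q*IZR q*IZR m)
    by (rewrite !plus_IZR, !mult_IZR, plus_IZR, !mult_IZR; ring).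
  assert (Hp : 0 < 2*IZR q*IZR q) by nra.
  set (X := (T - 1 - IZR (p + q*t0)) / (2*IZR q*IZR q)) in *.
  assert (HX : T - 1 - IZR (p + q*t0) = 2*IZR q*IZR q * X) by (unfold X; field; lra).
  split; nra.
Qed.

Lemma INR_Z (n : nat) : INR n = IZR (Z.of_nat n).
Proof. apply INR_IZR_INZ. Qed.

Lemma not_sq (n : nat) (nz : Z) : Z.of_nat n = nz ->
  (exists m : nat, sqrt (INR (2*n)) = INR m) -> exists b0, (0 <= b0 /\ 2*nz = b0*b0)%Z.
Proof.
  intros Hn [m Hm]. exists (Z.of_nat m). split; [lia|].
  assert (H : INR (2*n) = INR m * INR m).
  { rewrite <- Hm. rewrite sqrt_sqrt; auto. apply pos_INR. }
  rewrite <- mult_INR in H. apply INR_eq in H. lia.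
Qed.

Lemma wit_U (p q M c t0 w0 : Z) (N : nat) : (2 <= q)%Z -> (0 < c < M)%Z ->
  ((p+q*t0)*(p+q*t0) + c = 2*q*q*w0)%Z ->
  2 + 2*IZR q*IZR q + IZR M <= IZR q * sqrt (INR N) ->
  exists y, f2 N y /\ IZR p / IZR q < y /\
   y <= IZR p / IZR q + IZR c / (2 * IZR q * (IZR q * sqrt (INR N) - 1 - 2*IZR q*IZR q)).
Proof.
  intros Hq Hc Hw0 HT.
  assert (Hqr : 2 <= IZR q) by (apply IZR_le; lia).
  set (u := sqrt (INR N)) in *.
  assert (Hu2 : u * u = IZR (Z.of_nat N)) by (unfold u; rewrite sqrt_sqrt; [apply INR_Z|apply pos_INR]).
  assert (Hu0 : 0 <= u) by apply sqrt_pos.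
  set (T := IZR q * u) in *.
  destruct (choose_a p q t0 T Hq) as [m [Ha1 Ha2]].
  set (t := (t0 + 2*q*m)%Z) in *. set (a := (p + q*t)%Z) in *.
  set (nz := (w0 + 2*(p+q*t0)*m + 2*q*q*m*m)%Z).
  assert (Hnz : (a*a + c = 2*q*q*nz)%Z).
  { unfold a, t, nz. transitivity ((p+q*t0)*(p+q*t0) + c + 4*q*q*(p+q*t0)*m + 4*q*q*q*q*m*m)%Z.
    ring. rewrite Hw0. ring. }
  assert (HMr : IZR c < IZR M) by (apply IZR_lt; lia).
  assert (Hc0 : 0 < IZR c) by (apply IZR_lt; lia).
  assert (HaM : (M + 2 <= a)%Z).
  { cut (M + 1 < a)%Z; [lia|]. apply lt_IZR. rewrite plus_IZR. apply Rle_lt_trans with (T - 1 - 2*IZR q*IZR q); [|exact Ha2]. lra. }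
  assert (Hnz1 : (1 <= nz)%Z) by nia.
  set (n := Z.to_nat nz).
  assert (Hn : Z.of_nat n = nz) by (unfold n; lia).
  assert (HnN : (2*nz <= Z.of_nat N)%Z).
  { assert (H : IZR (a*a + c) <= IZR (q*q*Z.of_nat N)).
    { rewrite plus_IZR, !mult_IZR, <- Hu2.
      assert (0 <= IZR a) by (apply IZR_le; lia).
      assert (IZR a * IZR a <= (T-1)*(T-1)) by nra.
      unfold T in *. nra. }
    apply le_IZR in H. rewrite Hnz in H. nia. }
  assert (Hn1 : (1 <= n)%nat) by lia.
  assert (Hn2 : (2*n <= N)%nat) by lia.
  exists (sqrt (INR (2*n)) + IZR (-t)).
  destruct (s_facts n N Hn1 Hn2) as [Hs2 [Hs1 Hsu]].
  set (s := sqrt (INR (2*n))) in *.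
  assert (Hqs2 : IZR q * s * (IZR q * s) = IZR a * IZR a + IZR c).
  { replace (IZR q * s * (IZR q * s)) with (IZR q * IZR q * (s*s)) by ring.
    rewrite Hs2, Hn. rewrite <- !mult_IZR, <- plus_IZR, Hnz. f_equal. ring. }
  assert (Har : IZR a = IZR p + IZR q * IZR t) by (unfold a; rewrite plus_IZR, mult_IZR; ring).
  assert (HaT : T - 1 - 2*IZR q*IZR q < IZR a) by exact Ha2.
  assert (Ha0 : 0 < IZR a) by lra.
  assert (Hqs0 : 0 <= IZR q * s) by nra.
  assert (Hqsa : IZR a < IZR q * s).
  { destruct (Rlt_le_dec (IZR a) (IZR q * s)) as [|Hle]; [assumption|]. exfalso.
    assert (IZR q * s * (IZR q * s) <= IZR a * IZR a) by (apply Rmult_le_compat; lra). lra. }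
  assert (Hyx : s + IZR (-t) - IZR p / IZR q = IZR c / (IZR q * (IZR q * s + IZR a))).
  { rewrite opp_IZR. apply Rmult_eq_reg_r with (IZR q * (IZR q * s + IZR a)); [|nra].
    field_simplify; [|nra|nra]. rewrite Har in *. nra. }
  split; [|split].
  - exists n, (-t)%Z. split; [exact Hn1|split; [exact Hn2|split; [|reflexivity]]].
    intros Hsq. destruct (not_sq n nz Hn Hsq) as [b0 [Hb0 Hb]].
    assert (Hb2 : ((q*b0)*(q*b0) = a*a + c)%Z) by (rewrite Hnz; nia).
    assert (q*b0 > a)%Z by nia. nia.
  - assert (0 < IZR c / (IZR q * (IZR q * s + IZR a))) by (apply Rdiv_lt_0_compat; nra).
    lra.
  - assert (IZR c / (IZR q * (IZR q * s + IZR a)) <= IZR c / (2 * IZR q * (T - 1 - 2 * IZR q * IZR q))).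
    { apply div_le; [nra|nra|].
      assert (0 <= IZR c * IZR q) by nra.
      replace (IZR c * (2 * IZR q * (T - 1 - 2 * IZR q * IZR q))) with (IZR c * IZR q * (2 * (T - 1 - 2 * IZR q * IZR q))) by ring.
      replace (IZR c * (IZR q * (IZR q * s + IZR a))) with (IZR c * IZR q * (IZR q * s + IZR a)) by ring.
      apply Rmult_le_compat_l; lra. }
    unfold T in *. lra.
Qed.

Lemma wit_L (p q M c t0 w0 : Z) (N : nat) : (2 <= q)%Z -> (0 < c < M)%Z ->
  ((p+q*t0)*(p+q*t0) + c - M = 2*q*q*w0)%Z ->
  2 + 2*IZR q*IZR q + IZR M <= IZR q * sqrt (INR N) ->
  exists y, f2 N y /\ y < IZR p / IZR q /\
   IZR p / IZR q - IZR (M - c) / (IZR q * (2 * (IZR q * sqrt (INR N) - 1 - 2*IZR q*IZR q) - IZR (M - c))) <= y.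
Proof.
  intros Hq Hc Hw0 HT.
  assert (Hqr : 2 <= IZR q) by (apply IZR_le; lia).
  set (u := sqrt (INR N)) in *.
  assert (Hu2 : u * u = IZR (Z.of_nat N)) by (unfold u; rewrite sqrt_sqrt; [apply INR_Z|apply pos_INR]).
  assert (Hu0 : 0 <= u) by apply sqrt_pos.
  set (T := IZR q * u) in *.
  destruct (choose_a p q t0 T Hq) as [m [Ha1 Ha2]].
  set (t := (t0 + 2*q*m)%Z) in *. set (a := (p + q*t)%Z) in *.
  set (nz := (w0 + 2*(p+q*t0)*m + 2*q*q*m*m)%Z).
  set (d := (M - c)%Z) in *.
  assert (Hnz : (a*a - d = 2*q*q*nz)%Z).
  { unfold a, t, nz, d. transitivity ((p+q*t0)*(p+q*t0) + c - M + 4*q*q*(p+q*t0)*m + 4*q*q*q*q*m*m)%Z.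
    ring. rewrite Hw0. ring. }
  assert (Hd0 : 0 < IZR d) by (apply IZR_lt; unfold d; lia).
  assert (HdM : IZR d < IZR M) by (apply IZR_lt; unfold d; lia).
  assert (HaM : (M + 2 <= a)%Z).
  { cut (M + 1 < a)%Z; [lia|]. apply lt_IZR. rewrite plus_IZR. apply Rle_lt_trans with (T - 1 - 2*IZR q*IZR q); [|exact Ha2]. lra. }
  assert (Hdz : (0 < d < M)%Z) by (unfold d; lia).
  assert (Hnz1 : (1 <= nz)%Z).
  { assert (Haa : (a <= a*a)%Z) by nia.
    assert (H0 : (0 < 2*q*q*nz)%Z) by lia.
    destruct (Z_le_gt_dec nz 0) as [Hle|]; [|lia].
    assert (2*q*q*nz <= 0)%Z by (apply Z.mul_nonneg_nonpos; [nia|lia]). lia. }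
  set (n := Z.to_nat nz).
  assert (Hn : Z.of_nat n = nz) by (unfold n; lia).
  assert (HnN : (2*nz <= Z.of_nat N)%Z).
  { assert (H : IZR (a*a) <= IZR (q*q*Z.of_nat N)).
    { rewrite !mult_IZR, <- Hu2.
      assert (0 <= IZR a) by (apply IZR_le; lia).
      assert (IZR a * IZR a <= (T-1)*(T-1)) by nra.
      unfold T in *. nra. }
    apply le_IZR in H. nia. }
  assert (Hn1 : (1 <= n)%nat) by lia.
  assert (Hn2 : (2*n <= N)%nat) by lia.
  exists (sqrt (INR (2*n)) + IZR (-t)).
  destruct (s_facts n N Hn1 Hn2) as [Hs2 [Hs1 Hsu]].
  set (s := sqrt (INR (2*n))) in *.
  assert (Hqs2 : IZR q * s * (IZR q * s) = IZR a * IZR a - IZR d).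
  { replace (IZR q * s * (IZR q * s)) with (IZR q * IZR q * (s*s)) by ring.
    rewrite Hs2, Hn. rewrite <- !mult_IZR, <- minus_IZR, Hnz. f_equal. ring. }
  assert (Har : IZR a = IZR p + IZR q * IZR t) by (unfold a; rewrite plus_IZR, mult_IZR; ring).
  assert (HaT : T - 1 - 2*IZR q*IZR q < IZR a) by exact Ha2.
  assert (Ha0 : 0 < IZR a) by lra.
  assert (Hqs0 : 0 <= IZR q * s) by nra.
  assert (Had : IZR d + 1 <= IZR a) by (rewrite <- plus_IZR; apply IZR_le; lia).
  assert (Hqsa : IZR a - IZR d <= IZR q * s).
  { destruct (Rle_lt_dec (IZR a - IZR d) (IZR q * s)) as [|Hlt]; [assumption|]. exfalso.
    assert (IZR q * s * (IZR q * s) < (IZR a - IZR d) * (IZR a - IZR d)) by (apply Rmult_le_0_lt_compat; lra).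
    assert (IZR d * (IZR d + 1) <= IZR d * IZR a) by (apply Rmult_le_compat_l; lra).
    nra. }
  assert (Hyx : IZR p / IZR q - (s + IZR (-t)) = IZR d / (IZR q * (IZR a + IZR q * s))).
  { rewrite opp_IZR. apply Rmult_eq_reg_r with (IZR q * (IZR a + IZR q * s)); [|nra].
    field_simplify; [|nra|nra]. rewrite Har in *. nra. }
  split; [|split].
  - exists n, (-t)%Z. split; [exact Hn1|split; [exact Hn2|split; [|reflexivity]]].
    intros Hsq. destruct (not_sq n nz Hn Hsq) as [b0 [Hb0 Hb]].
    assert (Hb2 : ((q*b0)*(q*b0) = a*a - d)%Z) by (rewrite Hnz; nia).
    set (b := (q*b0)%Z) in *.
    assert (Hb00 : (0 <= b)%Z) by (unfold b; nia).
    assert (Hba : (b < a)%Z).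
    { destruct (Z_lt_le_dec b a) as [|Hle]; [assumption|].
      assert (a*a <= b*b)%Z by (apply Z.mul_le_mono_nonneg; lia). lia. }
    assert (b*b <= (a-1)*(a-1))%Z by (apply Z.mul_le_mono_nonneg; lia).
    lia.
  - assert (0 < IZR d / (IZR q * (IZR a + IZR q * s))) by (apply Rdiv_lt_0_compat; nra).
    lra.
  - assert (IZR d / (IZR q * (IZR a + IZR q * s)) <= IZR d / (IZR q * (2 * (T - 1 - 2 * IZR q * IZR q) - IZR d))).
    { apply div_le; [nra|nra|].
      assert (0 <= IZR d * IZR q) by nra.
      replace (IZR d * (IZR q * (2 * (T - 1 - 2 * IZR q * IZR q) - IZR d))) with (IZR d * IZR q * (2 * (T - 1 - 2 * IZR q * IZR q) - IZR d)) by ring.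
      replace (IZR d * (IZR q * (IZR a + IZR q * s))) with (IZR d * IZR q * (IZR a + IZR q * s)) by ring.
      apply Rmult_le_compat_l; lra. }
    unfold T in *. lra.
Qed.


Lemma lim2 (u : nat -> R) (A B b b' : R) : (forall C, eventually (fun N => C <= u N)) ->
  is_lim_seq (fun N => A * (u N / (u N - b)) + B * (u N / (u N - b'))) (A + B).
Proof.
  intros Hu. apply is_lim_seq_plus'.
  - assert (H := is_lim_seq_scal_l _ A _ (ratio_lim u b Hu)). simpl in H.
    rewrite Rmult_1_r in H. exact H.
  - assert (H := is_lim_seq_scal_l _ B _ (ratio_lim u b' Hu)). simpl in H.
    rewrite Rmult_1_r in H. exact H.
Qed.

Lemma general (p q M c w : Z) : (2 <= q)%Z -> (0 < c < M)%Z -> (M <= 4*q)%Z ->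
  (2*q*q = M*w)%Z ->
  (forall t, exists z, ((p+q*t)*(p+q*t) + c = M*z)%Z) ->
  (exists t w, ((p+q*t)*(p+q*t) + c = 2*q*q*w)%Z) ->
  (exists t w, ((p+q*t)*(p+q*t) + c - M = 2*q*q*w)%Z) ->
  is_lim_seq (G2seq (IZR p / IZR q)) (IZR M / (IZR q * IZR q)).
Proof.
  intros Hq Hc HM Hw H1 [t0 [w0 Hw0]] [t1 [w1 Hw1]].
  assert (Hqr : 2 <= IZR q) by (apply IZR_le; lia).
  assert (Hc0 : 0 < IZR c) by (apply IZR_lt; lia).
  assert (Hd0 : 0 < IZR (M - c)) by (apply IZR_lt; lia).
  assert (HMr : 0 < IZR M) by (apply IZR_lt; lia).
  set (x := IZR p / IZR q).
  set (A := IZR c / (IZR q * IZR q)). set (B := IZR (M - c) / (IZR q * IZR q)).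
  set (d := IZR (M - c)) in *.
  set (b1 := (1 + 2 * IZR q * IZR q) / IZR q).
  set (b2 := (2 + 4 * IZR q * IZR q + d) / (2 * IZR q)).
  set (u := fun N => sqrt (INR N)).
  assert (Hu : forall C, eventually (fun N => C <= u N)) by (intro C; apply sqrt_ev).
  apply is_lim_seq_le_le_loc with
    (u := fun N => A * (u N / (u N - 0)) + B * (u N / (u N - (-1/2))))
    (w := fun N => A * (u N / (u N - b1)) + B * (u N / (u N - b2))).
  2: { replace (IZR M / (IZR q * IZR q)) with (A + B). apply lim2, Hu.
       unfold A, B, d. rewrite minus_IZR. field. lra. }
  2: { replace (IZR M / (IZR q * IZR q)) with (A + B). apply lim2, Hu.
       unfold A, B, d. rewrite minus_IZR. field. lra. }
  destruct (Hu ((2 + 2 * IZR q * IZR q + IZR M) / IZR q + 1)) as [N0 HN0].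
  exists N0. intros N HN. specialize (HN0 N HN). unfold u in *.
  set (v := sqrt (INR N)) in *.
  assert (Hv : 2 + 2 * IZR q * IZR q + IZR M + IZR q <= IZR q * v).
  { assert (H := Rmult_le_compat_l (IZR q) _ _ ltac:(lra) HN0).
    replace (IZR q * ((2 + 2 * IZR q * IZR q + IZR M) / IZR q + 1))
      with (2 + 2 * IZR q * IZR q + IZR M + IZR q) in H by (field; lra). exact H. }
  assert (Hv1 : 1 <= v) by nra.
  destruct (wit_U p q M c t0 w0 N Hq Hc Hw0 ltac:(fold v; lra)) as [yU [HU1 [HU2 HU3]]].
  destruct (wit_L p q M c t1 w1 N Hq Hc Hw1 ltac:(fold v; lra)) as [yL [HL1 [HL2 HL3]]].
  fold v x d in HU3, HL3. fold x in HU2, HL2.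
  destruct (L_glb (fun y => f2 N y /\ x < y) (x + IZR c / (2 * IZR q * IZR q * v)) yU)
    as [G1 G2].
  { split; assumption. }
  { intros y [[n [k [Hn1 [Hn2 [_ ->]]]]] Hy].
    apply (lower_U p q M c w N n k); auto. }
  destruct (L_lub (fun y => f2 N y /\ y < x) (x - d / (IZR q * IZR q * (2 * v + 1))) yL)
    as [L1 L2].
  { split; assumption. }
  { intros y [[n [k [Hn1 [Hn2 [_ ->]]]]] Hy].
    apply (lower_L p q M c w N n k); auto. }
  unfold G2seq, gap. fold v.
  set (G := real (Glb_Rbar (fun y => f2 N y /\ x < y))) in *.
  set (L := real (Lub_Rbar (fun y => f2 N y /\ y < x))) in *.
  assert (Hv0 : 0 < v) by lra.
  split.
  - replace (A * (v / (v - 0)) + B * (v / (v - -1/2))) with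
      (2 * v * (IZR c / (2 * IZR q * IZR q * v) + d / (IZR q * IZR q * (2 * v + 1))))
      by (unfold A, B; field; lra).
    apply Rmult_le_compat_l; lra.
  - assert (Hb1 : 0 < IZR q * v - 1 - 2 * IZR q * IZR q) by lra.
    assert (Hb2 : 0 < 2 * (IZR q * v - 1 - 2 * IZR q * IZR q) - d).
    { assert (d < IZR M) by (unfold d; rewrite minus_IZR; lra). lra. }
    replace (A * (v / (v - b1)) + B * (v / (v - b2))) with
      (2 * v * (IZR c / (2 * IZR q * (IZR q * v - 1 - 2 * IZR q * IZR q)) +
                d / (IZR q * (2 * (IZR q * v - 1 - 2 * IZR q * IZR q) - d)))).
    + apply Rmult_le_compat_l; lra.
    + unfold A, B, b1, b2. field. repeat split; try lra.
Qed.


Theorem mainTheorem2 (p q : Z) (Hcop : Z.gcd p q = 1%Z) (Hq : (2 <= q)%Z) :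
  ((q mod 4 = 2)%Z -> is_lim_seq (G2seq (IZR p / IZR q)) (4 / IZR q)) /\
  ((q mod 4 = 0)%Z -> is_lim_seq (G2seq (IZR p / IZR q)) (2 / IZR q)) /\
  (Z.odd q = true -> is_lim_seq (G2seq (IZR p / IZR q)) (1 / IZR q)).
Proof.
  destruct (Z.gcd_bezout p q 1 Hcop) as [u [v Huv]].
  assert (Hqr : 2 <= IZR q) by (apply IZR_le; lia).
  assert (Hdm := Z.div_mod q 4 ltac:(lia)).
  split; [|split].
  - intro Hm. set (r' := (q / 4)%Z) in *. set (r := (2*r'+1)%Z).
    assert (Hqr2 : q = (2*r)%Z) by (unfold r; lia).
    destruct (Z.Even_or_Odd p) as [[p0 Hp0]|[p' Hp']].
    { exfalso. subst p. rewrite Hqr2 in Huv.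
      assert (Z.mul 2 (u*p0 + v*r) = 1)%Z by (rewrite <- Huv; ring). lia. }
    destruct (hyps p q (4*q) Hq Hcop ltac:(lia) ltac:(exists 4%Z; ring)
      (fun t => two_F1 p q r p' r' t Hqr2 eq_refl Hp')
      (fun j => two_F2 p q r j u v Hqr2 Huv)) as [c [Hc [H1 [H3 H4]]]].
    assert (L := general p q (4*q) c r Hq Hc ltac:(lia) ltac:(rewrite Hqr2; ring) H1 H3 H4).
    replace (4 / IZR q) with (IZR (4*q) / (IZR q * IZR q)); [exact L|].
    rewrite mult_IZR. field. lra.
  - intro Hm. set (s := (q / 4)%Z) in *.
    assert (Hqs : q = (4*s)%Z) by lia.
    destruct (Z.Even_or_Odd p) as [[p0 Hp0]|[p' Hp']].
    { exfalso. subst p. rewrite Hqs in Huv.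
      assert (Z.mul 2 (u*p0 + v*(2*s)) = 1)%Z by (rewrite <- Huv; ring). lia. }
    destruct (hyps p q (2*q) Hq Hcop ltac:(lia) ltac:(exists 2%Z; ring)
      (fun t => four_F1 p q s t Hqs)
      (fun j => four_F2 p q s p' j u v Hqs Hp' Huv)) as [c [Hc [H1 [H3 H4]]]].
    assert (L := general p q (2*q) c q Hq Hc ltac:(lia) ltac:(ring) H1 H3 H4).
    replace (2 / IZR q) with (IZR (2*q) / (IZR q * IZR q)); [exact L|].
    rewrite mult_IZR. field. lra.
  - intro Hodd. apply Z.odd_spec in Hodd. destruct Hodd as [h Hh].
    destruct (hyps p q q Hq Hcop ltac:(lia) ltac:(exists 1%Z; ring)
      (fun t => odd_F1 p q t)
      (fun j => odd_F2 p q h j u v Hh Huv)) as [c [Hc [H1 [H3 H4]]]].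
    assert (L := general p q q c (2*q) Hq Hc ltac:(lia) ltac:(ring) H1 H3 H4).
    replace (1 / IZR q) with (IZR q / (IZR q * IZR q)); [exact L|].
    field. lra.
Qed.
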